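(* Let $X$ be a complete CAT(0) space, $f:X\to(-\infty,\infty]$ a proper, convex, lower semicontinuous function, $C\subseteq X$ nonempty, and $\psi:[0,\infty)\to[0,\infty)$ an increasing function vanishing only at $0$. Assume $f$ is uniformly convex on $C$ with modulus $\psi$, and let $\gamma>0$ be such that $J_\gamma(C)\subseteq C$. Then: (1) for all $u,v\in C$, $d^2(J_\gamma u,v)\le d^2(u,v)-d^2(u,J_\gamma u)-2\gamma(f(J_\gamma u)-f(v))-2\gamma\psi(d(v,J_\gamma u))$; (2) for all $x,y\in C$, $d^2(J_\gamma x,J_\gamma y)\le d^2(x,y)-4\gamma\psi(d(J_\gamma x,J_\gamma y))$.
   Context: A geodesic space $(X,d)$ is CAT(0) if for all $z\in X$, all geodesics $\gamma:[a,b]\to X$ and all $t\in[0,1]$, $d^2(z,\gamma((1-t)a+tb))\le(1-t)d^2(z,\gamma(a))+td^2(z,\gamma(b))-t(1-t)d^2(\gamma(a),\gamma(b))$; $(1-t)x+ty$ denotes the point at distance $t\,d(x,y)$ from $x$ on the unique geodesic from $x$ to $y$. $J_\gamma(x):=\arg\min_{y\in X}\left[f(y)+\frac1{2\gamma}d^2(x,y)\right]$ (exists uniquely). $f$ is uniformly convex on $C$ with modulus $\psi$ if for all $x,y\in C$, $t\in[0,1]$: $f((1-t)x+ty)\le(1-t)f(x)+tf(y)-t(1-t)\psi(d(x,y))$. *)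

(* Defs.v *)
From Stdlib Require Import Reals.
From Coquelicot Require Import Rbar.
Open Scope R_scope.

Section Defs.
Variable X : Type.
Variable d : X -> X -> R.

Definition is_metric : Prop :=
  (forall x y, 0 <= d x y) /\ (forall x y, d x y = 0 <-> x = y) /\
  (forall x y, d x y = d y x) /\ (forall x y z, d x z <= d x y + d y z).

Definition complete_metric : Prop :=
  forall u : nat -> X,
    (forall eps, 0 < eps -> exists N, forall m n, (N <= m)%nat -> (N <= n)%nat ->
        d (u m) (u n) < eps) ->
    exists l, forall eps, 0 < eps -> exists N, forall n, (N <= n)%nat -> d (u n) l < eps.

Definition is_geodesic (c : R -> X) (a b : R) : Prop :=
  a <= b /\ forall s s', a <= s <= b -> a <= s' <= b -> d (c s) (c s') = Rabs (s - s').

Definition geodesic_space : Prop :=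
  forall x y, exists c a b, is_geodesic c a b /\ c a = x /\ c b = y.

Definition CAT0 : Prop :=
  geodesic_space /\
  forall (z : X) (c : R -> X) (a b t : R), is_geodesic c a b -> 0 <= t <= 1 ->
    (d z (c ((1 - t) * a + t * b))) ^ 2 <=
      (1 - t) * (d z (c a)) ^ 2 + t * (d z (c b)) ^ 2
      - t * (1 - t) * (d (c a) (c b)) ^ 2.

(* geo_pt x y t p : p is the point (1-t)x + t y, i.e. the point at distance
   t d(x,y) from x on the (unique, in CAT(0)) geodesic from x to y *)
Definition geo_pt (x y : X) (t : R) (p : X) : Prop :=
  exists c : R -> X, is_geodesic c 0 (d x y) /\ c 0 = x /\ c (d x y) = y /\
    p = c (t * d x y).

Variable f : X -> Rbar.

Definition proper_fun : Prop :=
  (forall x, f x <> m_infty) /\ exists x, f x <> p_infty.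

Definition convex_fun : Prop :=
  forall x y t p, 0 <= t <= 1 -> geo_pt x y t p ->
    Rbar_le (f p) (Rbar_plus (Rbar_mult (1 - t) (f x)) (Rbar_mult t (f y))).

Definition lsc_fun : Prop :=
  forall x (r : R), Rbar_lt r (f x) ->
    exists eps, 0 < eps /\ forall y, d x y < eps -> Rbar_lt r (f y).

Definition uniformly_convex_on (C : X -> Prop) (psi : R -> R) : Prop :=
  forall x y t p, C x -> C y -> 0 <= t <= 1 -> geo_pt x y t p ->
    Rbar_le (f p)
      (Rbar_minus (Rbar_plus (Rbar_mult (1 - t) (f x)) (Rbar_mult t (f y)))
                  (Finite (t * (1 - t) * psi (d x y)))).

Definition is_resolvent (gamma : R) (x p : X) : Prop :=
  forall y, Rbar_le (Rbar_plus (f p) (Finite ((d x p) ^ 2 / (2 * gamma))))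
                    (Rbar_plus (f y) (Finite ((d x y) ^ 2 / (2 * gamma)))).
End Defs.

Definition modulus (psi : R -> R) : Prop :=
  (forall t, 0 <= t -> 0 <= psi t) /\
  (forall s t, 0 <= s -> s <= t -> psi s <= psi t) /\
  (forall t, 0 <= t -> (psi t = 0 <-> t = 0)).

Arguments is_metric {X}. Arguments complete_metric {X}. Arguments is_geodesic {X}.
Arguments geodesic_space {X}. Arguments CAT0 {X}. Arguments geo_pt {X}.
Arguments proper_fun {X}. Arguments convex_fun {X}. Arguments lsc_fun {X}.
Arguments uniformly_convex_on {X}. Arguments is_resolvent {X}.

(* Main.v *)
Require Import Defs.
From Stdlib Require Import Reals Lra Psatz.
From Coquelicot Require Import Rbar.
Open Scope R_scope.

Lemma geo_exists (X : Type) (d : X -> X -> R) (Hcat : CAT0 d) (p v : X) :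
  exists c, is_geodesic d c 0 (d p v) /\ c 0 = p /\ c (d p v) = v.
Proof.
  destruct Hcat as [Hg _]. destruct (Hg p v) as [c [a [b [[Hab Hc] [Ha Hb]]]]].
  assert (Hd: d p v = b - a).
  { rewrite <- Ha, <- Hb. rewrite Hc by lra. rewrite Rabs_minus_sym; apply Rabs_right; lra. }
  exists (fun s => c (a + s)). rewrite Hd. split; [split|split].
  - lra.
  - intros s s' Hs Hs'. rewrite Hc by lra. f_equal; ring.
  - simpl; rewrite Rplus_0_r; auto.
  - replace (a + (b-a)) with b by ring; auto.
Qed.

Lemma cat_pt (X : Type) (d : X -> X -> R) (Hcat : CAT0 d) (p v : X) (c : R -> X)
  (Hc : is_geodesic d c 0 (d p v)) (H0 : c 0 = p) (H1 : c (d p v) = v) z t :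
  0 <= t <= 1 ->
  d z (c (t * d p v)) ^ 2 <= (1-t) * d z p ^ 2 + t * d z v ^ 2 - t * (1-t) * d p v ^ 2.
Proof.
  intros Ht. destruct Hcat as [_ H]. specialize (H z c 0 (d p v) t Hc Ht).
  replace ((1-t)*0 + t*d p v) with (t * d p v) in H by ring.
  rewrite H0, H1 in H. exact H.
Qed.

Lemma lim0 (A B K : R) : (forall t, 0 < t <= 1 -> A <= B + t * K) -> A <= B.
Proof.
  intros H. destruct (Rle_dec A B) as [h|h]; auto. exfalso.
  set (del := A - B). set (M := Rabs K + 1).
  assert (Hdel : 0 < del) by (unfold del; lra).
  assert (HM : 0 < M) by (unfold M; pose proof (Rabs_pos K); lra).
  set (t := del / (del + 2 * M)).
  assert (Ht : t * (del + 2*M) = del) by (unfold t; field; lra).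
  assert (Htp : 0 < t) by (unfold t; apply Rdiv_lt_0_compat; lra).
  assert (Ht1 : t <= 1).
  { unfold t. apply Rmult_le_reg_r with (del + 2*M). lra.
    unfold Rdiv. rewrite Rmult_assoc, Rinv_l by lra. lra. }
  specialize (H t (conj Htp Ht1)).
  assert (t * K <= t * Rabs K) by (apply Rmult_le_compat_l; [lra| apply Rle_abs]).
  assert (t * Rabs K < t * (del + 2*M)).
  { apply Rmult_lt_compat_l. lra. pose proof (Rabs_pos K). unfold M. lra. }
  unfold del in *. lra.
Qed.

Lemma quad (X : Type) (d : X -> X -> R) (Hmet : is_metric d) (Hcat : CAT0 d) a b c e :
  d a c ^ 2 + d b e ^ 2 <= d a b ^ 2 + d b c ^ 2 + d c e ^ 2 + d e a ^ 2.
Proof.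
  destruct Hmet as [Hpos [Heq [Hsym Htri]]].
  destruct (geo_exists X d Hcat b e) as [g [Hg [H0 H1]]].
  assert (Hh : 0 <= /2 <= 1) by lra.
  set (m := g (/2 * d b e)).
  pose proof (cat_pt X d Hcat b e g Hg H0 H1 a (/2) Hh) as Ha.
  pose proof (cat_pt X d Hcat b e g Hg H0 H1 c (/2) Hh) as Hc.
  fold m in Ha, Hc.
  pose proof (Htri a m c). rewrite (Hsym m c) in H.
  pose proof (Hpos a m). pose proof (Hpos c m). pose proof (Hpos a c).
  rewrite (Hsym e a), (Hsym b c).
  assert (d a c ^ 2 <= (d a m + d c m) ^ 2) by (apply pow_incr; lra).
  assert ((d a m + d c m) ^ 2 <= 2 * (d a m ^ 2 + d c m ^ 2)) by (pose proof (pow2_ge_0 (d a m - d c m)); nra).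
  lra.
Qed.

Theorem lemma4p6 (X : Type) (d : X -> X -> R) (f : X -> Rbar)
  (C : X -> Prop) (psi : R -> R) (gamma : R) (J : X -> X)
  (Hmet : is_metric d) (Hcomp : complete_metric d) (Hcat : CAT0 d)
  (Hproper : proper_fun f) (Hconv : convex_fun d f) (Hlsc : lsc_fun d f)
  (HCne : exists x, C x) (Hpsi : modulus psi)
  (Hunif : uniformly_convex_on d f C psi)
  (Hgamma : 0 < gamma)
  (HJ : forall x, is_resolvent d f gamma x (J x))
  (HJC : forall x, C x -> C (J x)) :
  (forall u v, C u -> C v ->
     Rbar_le (Finite ((d (J u) v) ^ 2))
       (Rbar_plus
          (Finite ((d u v) ^ 2 - (d u (J u)) ^ 2 - 2 * gamma * psi (d v (J u))))
          (Rbar_mult (2 * gamma) (Rbar_minus (f v) (f (J u)))))) /\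
  (forall x y, C x -> C y ->
     (d (J x) (J y)) ^ 2 <= (d x y) ^ 2 - 4 * gamma * psi (d (J x) (J y))).
Proof.
  destruct Hproper as [Hnm [x0 Hx0]].
  assert (Hfin : forall u, exists r, f (J u) = Finite r).
  { intros u. specialize (HJ u x0). unfold is_resolvent in HJ.
    destruct (f (J u)) as [r| |] eqn:E.
    { exists r; reflexivity. }
    { exfalso. destruct (f x0) eqn:E0; simpl in HJ; try contradiction; try congruence. }
    { exfalso; apply (Hnm (J u)); auto. } }
  assert (P1 : forall u v, C u -> C v ->
     Rbar_le (Finite ((d (J u) v) ^ 2))
       (Rbar_plus
          (Finite ((d u v) ^ 2 - (d u (J u)) ^ 2 - 2 * gamma * psi (d v (J u))))
          (Rbar_mult (2 * gamma) (Rbar_minus (f v) (f (J u)))))).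
  { intros u v Cu Cv. set (p := J u). assert (Cp : C p) by (apply HJC; auto).
    destruct (Hfin u) as [fp Hfp]. fold p in Hfp. rewrite Hfp.
    destruct (f v) as [fv| |] eqn:Efv.
    2:{ assert (E: Rbar_mult (2*gamma) (Rbar_minus p_infty fp) = p_infty).
        { unfold Rbar_minus, Rbar_plus, Rbar_plus', Rbar_opp, Rbar_mult, Rbar_mult'.
          destruct (Rle_dec 0 (2*gamma)); [|lra].
          destruct (Rle_lt_or_eq_dec 0 (2*gamma) r); [reflexivity| lra]. }
        rewrite E. simpl. exact I. }
    2:{ exfalso; apply (Hnm v); auto. }
    simpl.
    destruct Hmet as [Hpos [Heq [Hsym Htri]]].
    rewrite (Hsym v p).
    apply lim0 with (K := d p v ^ 2 + 2 * gamma * psi (d p v)).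
    intros t Ht.
    destruct (geo_exists X d Hcat p v) as [c [Hg [H0 H1]]].
    assert (Ht' : 0 <= t <= 1) by lra.
    pose proof (cat_pt X d Hcat p v c Hg H0 H1 u t Ht') as H3.
    set (q := c (t * d p v)) in H3.
    assert (Hgq : geo_pt d p v t q) by (exists c; auto).
    pose proof (Hunif p v t q Cp Cv Ht' Hgq) as H4.
    rewrite Hfp, Efv in H4.
    pose proof (HJ u q) as H2. unfold is_resolvent in H2. fold p in H2. rewrite Hfp in H2.
    destruct (f q) as [fq| |] eqn:Efq.
    2:{ simpl in H4. contradiction. }
    2:{ exfalso; apply (Hnm q); auto. }
    simpl in H4, H2.
    assert (H2' : 2*gamma*fp + d u p ^ 2 <= 2*gamma*fq + d u q ^ 2).
    { apply Rmult_le_compat_l with (r := 2*gamma) in H2; [|lra].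
      replace (2*gamma*(fp + d u p * (d u p * 1)/(2*gamma))) with (2*gamma*fp + d u p ^ 2) in H2 by (field; lra).
      replace (2*gamma*(fq + d u q * (d u q * 1)/(2*gamma))) with (2*gamma*fq + d u q ^ 2) in H2 by (field; lra).
      exact H2. }
    assert (H4' : 2*gamma*fq <= 2*gamma*((1-t)*fp + t*fv - t*(1-t)*psi (d p v))).
    { apply Rmult_le_compat_l; lra. }
    set (E := 2*gamma*fv - 2*gamma*(1-t)*psi (d p v) + d u v ^ 2 - d u p ^ 2 - (1-t)* d p v ^ 2 - 2*gamma*fp).
    assert (HtE' : t * E = (2*gamma*((1-t)*fp + t*fv - t*(1-t)*psi (d p v)) + ((1-t) * d u p ^ 2 + t * d u v ^ 2 - t * (1-t) * d p v ^ 2)) - (2*gamma*fp + d u p ^ 2)) by (unfold E; ring).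
    assert (HtE : 0 <= t * E) by lra.
    assert (HE : 0 <= E).
    { destruct (Rle_dec 0 E) as [h|h]; [exact h|]. apply Rnot_le_lt in h. exfalso.
      assert (t * E < t * 0) by (apply Rmult_lt_compat_l; lra). lra. }
    unfold E in HE. lra. }
  split; [exact P1|].
  intros x y Cx Cy.
  pose proof (P1 x (J y) Cx (HJC y Cy)) as A.
  pose proof (P1 y (J x) Cy (HJC x Cx)) as B.
  destruct (Hfin x) as [a Ha]. destruct (Hfin y) as [b Hb].
  rewrite Ha, Hb in A. rewrite Ha, Hb in B. simpl in A, B.
  pose proof (quad X d Hmet Hcat x y (J y) (J x)) as Q.
  destruct Hmet as [Hpos [Heq [Hsym Htri]]].
  rewrite (Hsym (J y) (J x)) in A, B, Q. rewrite (Hsym (J x) x) in Q.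
  lra.
Qed.
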